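(* For all non-negative integers $p,q,r$ with $p+q\le r$, $\lambda_{\min}(\mathcal{Q}_{p,q,r})\ge-\tau$, where $\tau=\frac{1+\sqrt5}{2}$.
   Context: An edge-signed graph is a finite simple graph each of whose edges is labelled $+$ or $-$; its signed adjacency matrix $M(\mathcal{S})$ has $(u,v)$-entry $1$ for a $(+)$-edge, $-1$ for a $(-)$-edge, $0$ otherwise, and $\lambda_{\min}(\mathcal{S})$ denotes its smallest eigenvalue. For non-negative integers $p,q,r$ with $p+q\le r$, $\mathcal{Q}_{p,q,r}$ is the edge-signed graph defined as follows: its vertex set is a disjoint union $V_p\cup V_q\cup V_r$ with $|V_p|=p$, $|V_q|=q$, $|V_r|=r$; choose disjoint subsets $U_p,U_q\subseteq V_r$ with $|U_p|=p$, $|U_q|=q$ and bijections $\sigma:V_p\to U_p$, $\rho:V_q\to U_q$. The $(+)$-edges are all pairs of distinct vertices of $V_r$ together with the pairs $\{v,\sigma(v)\}$, $v\in V_p$; the $(-)$-edges are the pairs $\{v,\rho(v)\}$, $v\in V_q$; there are no other edges. *)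

(* Defs.v *)
From HB Require Import structures.
From mathcomp Require Import all_boot all_order all_algebra.
Set Implicit Arguments. Unset Strict Implicit. Unset Printing Implicit Defensive.
Import Order.TTheory GRing.Theory Num.Theory.
Local Open Scope ring_scope.

(* Vertices of Q_{p,q,r} are 'I_(p+q+r) = 'I_((p+q)+r): the first p are V_p,
   the next q are V_q, the last r are V_r. *)
Definition Qclass (p q r : nat) (i : 'I_(p + q + r)) : ('I_p + 'I_q) + 'I_r :=
  match split i with
  | inl a => inl (split a)
  | inr k => inr k
  end.

Definition Qentry (R : pzRingType) (p q r : nat)
    (sigma : 'I_p -> 'I_r) (rho : 'I_q -> 'I_r)
    (u v : ('I_p + 'I_q) + 'I_r) : R :=
  match u, v with
  | inr a, inr b => if a != b then 1 else 0
  | inl (inl x), inr b => if sigma x == b then 1 else 0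
  | inr b, inl (inl x) => if sigma x == b then 1 else 0
  | inl (inr y), inr b => if rho y == b then -1 else 0
  | inr b, inl (inr y) => if rho y == b then -1 else 0
  | _, _ => 0
  end.

Definition Qmx (R : pzRingType) (p q r : nat)
    (sigma : 'I_p -> 'I_r) (rho : 'I_q -> 'I_r) : 'M[R]_(p + q + r) :=
  \matrix_(i, j) Qentry R sigma rho (Qclass i) (Qclass j).

Definition tau (R : rcfType) : R := (1 + Num.sqrt 5) / 2.

(* Main.v *)
Require Import Defs.
From HB Require Import structures.
From mathcomp Require Import all_boot all_order all_algebra.
From mathcomp Require Import ring lra.
Import Order.TTheory GRing.Theory Num.Theory.
Local Open Scope ring_scope.

Lemma Qclass_p p q r (x : 'I_p) : Qclass (lshift r (lshift q x)) = inl (inl x).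
Proof.
rewrite /Qclass.
have -> : split (lshift r (lshift q x)) = inl (lshift q x) by exact: (unsplitK (inl _)).
by have -> : split (lshift q x) = inl x by exact: (unsplitK (inl _)).
Qed.

Lemma Qclass_q p q r (y : 'I_q) : Qclass (lshift r (rshift p y)) = inl (inr y).
Proof.
rewrite /Qclass.
have -> : split (lshift r (rshift p y)) = inl (rshift p y) by exact: (unsplitK (inl _)).
by have -> : split (rshift p y) = inr y by exact: (unsplitK (inr _)).
Qed.

Lemma Qclass_r p q r (b : 'I_r) : Qclass (rshift (p + q) b) = inr b.
Proof.
rewrite /Qclass.
by have -> : split (rshift (p + q) b) = inr b by exact: (unsplitK (inr _)).
Qed.

Lemma sum_split (R : rcfType) p q r (F : 'I_(p + q + r) -> R) :
  \sum_i F i = \sum_(x < p) F (lshift r (lshift q x))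
             + \sum_(y < q) F (lshift r (rshift p y))
             + \sum_(b < r) F (rshift (p + q) b).
Proof. by rewrite big_split_ord /= big_split_ord. Qed.

Lemma count1 (R : rcfType) m r (f : 'I_m -> 'I_r) (hf : injective f) (b : 'I_r) :
  (\sum_(x < m) (if f x == b then 1 else 0) : R) =
  if [exists x, f x == b] then 1 else 0.
Proof.
case: ifP => [/existsP [x0 /eqP Hx0] | /negbT Hn].
  rewrite (bigD1 x0) //= Hx0 eqxx big1 ?addr0 // => x hx.
  case: eqP => // e; exfalso; move/negP: hx; apply; apply/eqP; apply: hf.
  by rewrite e Hx0.
rewrite big1 // => x _; case: eqP => // e; exfalso; move/negP: Hn; apply.
by apply/existsP; exists x; rewrite e.
Qed.

Theorem mainTheorem5 (R : rcfType) (p q r : nat) (hpqr : (p + q <= r)%N)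
    (sigma : 'I_p -> 'I_r) (rho : 'I_q -> 'I_r)
    (hsigma : injective sigma) (hrho : injective rho)
    (hdisj : forall (x : 'I_p) (y : 'I_q), sigma x != rho y)
    (a : R) :
  eigenvalue (Qmx R sigma rho) a -> - tau R <= a.
Proof.
move/eigenvalueP => [v Hv vne0].
rewrite leNgt; apply/negP => ha.
have E j : \sum_i v 0 i * Qmx R sigma rho i j = a * v 0 j.
  by have := congr1 (fun m : 'M[R]_(1, p + q + r) => m 0 j) Hv; rewrite !mxE.
pose fp x := v 0 (lshift r (lshift q x)).
pose fq y := v 0 (lshift r (rshift p y)).
pose g b := v 0 (rshift (p + q) b).
have E1 x : g (sigma x) = a * fp x.
  rewrite -E sum_split big1 ?add0r; last first.
    by move=> x' _; rewrite mxE Qclass_p Qclass_p /= mulr0.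
  rewrite big1 ?add0r; last first.
    by move=> y' _; rewrite mxE Qclass_q Qclass_p /= mulr0.
  rewrite (bigD1 (sigma x)) //= mxE Qclass_r Qclass_p /= eqxx mulr1.
  rewrite big1 ?addr0 // => b hb; rewrite mxE Qclass_r Qclass_p /=.
  by rewrite eq_sym (negbTE hb) mulr0.
have E2 y : g (rho y) = - a * fq y.
  rewrite mulNr -E sum_split big1 ?add0r; last first.
    by move=> x' _; rewrite mxE Qclass_p Qclass_q /= mulr0.
  rewrite big1 ?add0r; last first.
    by move=> y' _; rewrite mxE Qclass_q Qclass_q /= mulr0.
  rewrite (bigD1 (rho y)) //= mxE Qclass_r Qclass_q /= eqxx mulrN1.
  rewrite big1 ?addr0 ?opprK // => b hb; rewrite mxE Qclass_r Qclass_q /=.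
  by rewrite eq_sym (negbTE hb) mulr0.
pose T := \sum_(b < r) g b.
pose kp (b : 'I_r) : R := if [exists x, sigma x == b] then 1 else 0.
pose kq (b : 'I_r) : R := if [exists y, rho y == b] then 1 else 0.
have E3 b : a * T = g b * (a ^+ 2 + a - (kp b + kq b)).
  have := E (rshift (p + q) b); rewrite sum_split.
  rewrite (eq_bigr (fun x => fp x * (if sigma x == b then 1 else 0))); last first.
    by move=> x _; rewrite mxE Qclass_p Qclass_r.
  rewrite (eq_bigr (fun y => fq y * (if rho y == b then -1 else 0))); last first.
    by move=> y _; rewrite mxE Qclass_q Qclass_r.
  rewrite (eq_bigr (fun c => g c * (if c != b then 1 else 0))); last first.
    by move=> c _; rewrite mxE !Qclass_r.
  have HP : a * (\sum_(x < p) fp x * (if sigma x == b then 1 else 0)) = g b * kp b.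
    rewrite /kp -(count1 R _ _ _ hsigma) mulr_sumr mulr_sumr; apply: eq_bigr => x _.
    case: eqP => [<-|_]; last by rewrite !mulr0.
    by rewrite E1 !mulr1.
  have HQ : a * (\sum_(y < q) fq y * (if rho y == b then -1 else 0)) = g b * kq b.
    rewrite /kq -(count1 R _ _ _ hrho) mulr_sumr mulr_sumr; apply: eq_bigr => y _.
    case: eqP => [<-|_]; last by rewrite !mulr0.
    by rewrite E2; ring.
  have HT : \sum_(c < r) g c * (if c != b then 1 else 0) = T - g b.
    rewrite /T [in RHS](bigD1 b) //= (bigD1 b) //= eqxx mulr0 add0r.
    rewrite (eq_bigr (fun c => g c)); first by ring.
    by move=> c hc; rewrite hc mulr1.
  rewrite HT => H.
  have := congr1 (fun z => a * z) H; rewrite !mulrDr HP HQ => H2.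
  move/eqP: H2; rewrite -subr_eq0 => /eqP H2.
  apply/eqP; rewrite -subr_eq0; apply/eqP; rewrite -H2 /g; ring.
have hk b : kp b + kq b <= 1.
  rewrite /kp /kq; case: existsP => [[x /eqP hx]|_]; case: existsP => [[y /eqP hy]|_].
  - by have := hdisj x y; rewrite hx hy eqxx.
  - by rewrite addr0.
  - by rewrite add0r.
  - by rewrite addr0 ler01.
have ht1 : 1 < tau R.
  have h5 : Num.sqrt (5 : R) ^+ 2 = 5 by rewrite sqr_sqrtr // ler0n.
  have h0 : 0 <= Num.sqrt (5 : R) by exact: sqrtr_ge0.
  rewrite /tau; nra.
have htt : tau R ^+ 2 = tau R + 1.
  have h5 : Num.sqrt (5 : R) ^+ 2 = 5 by rewrite sqr_sqrtr // ler0n.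
  rewrite /tau; nra.
have hquad : 0 < a ^+ 2 + a - 1 by nra.
have hc b : 0 < a ^+ 2 + a - (kp b + kq b) by have := hk b; lra.
have hg b : g b = a * T / (a ^+ 2 + a - (kp b + kq b)).
  by rewrite (E3 b) mulfK // gt_eqF.
pose S := \sum_(b < r) (a ^+ 2 + a - (kp b + kq b))^-1.
have hS : 0 <= S by apply: sumr_ge0 => b _; rewrite invr_ge0 ltW.
have hT : T = a * T * S.
  by rewrite {1}/T (eq_bigr _ (fun b _ => hg b)) -mulr_sumr.
have ha0 : a < 0 by lra.
have hT0 : T = 0.
  have h0 : T - a * T * S = 0 by rewrite -hT subrr.
  have : T * (1 - a * S) = 0 by rewrite -[RHS]h0; ring.
  move/eqP; rewrite mulf_eq0 => /orP [/eqP //|].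
  have : 0 < 1 - a * S by nra.
  by move=> h /eqP h'; rewrite h' ltxx in h.
have hg0 b : g b = 0 by rewrite hg hT0 mulr0 mul0r.
have hfp x : fp x = 0.
  have := E1 x; rewrite hg0 => /esym /eqP; rewrite mulf_eq0 => /orP [/eqP|/eqP //].
  by move=> h; rewrite h ltxx in ha0.
have hfq y : fq y = 0.
  have := E2 y; rewrite hg0 => /esym /eqP; rewrite mulf_eq0 oppr_eq0 => /orP [/eqP|/eqP //].
  by move=> h; rewrite h ltxx in ha0.
move/negP: vne0; apply; apply/eqP/rowP => j; rewrite !mxE.
rewrite -(splitK j); case: (split j) => [k|k] /=; last exact: hg0.
rewrite -(splitK k); case: (split k) => [k'|k'] /=; [exact: hfp | exact: hfq].
Qed.
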